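(* Let $(\mathbf x,\mathbf p,\mu)$ be a deterministic TFM satisfying weak UIC and $2$-weak-SCP. Let $\mathbf b=(b_1,\dots,b_m)$ be a bid vector and $i$ a user with $x_i(\mathbf b)=1$, and let $\mathbf b'=(\mathbf b_{-i},b_i')$ be such that $x_i(\mathbf b')=1$. Then (1) $\mu(\mathbf b)=\mu(\mathbf b')$; and (2) for every user $j$ with $x_j(\mathbf b)=1$ and $b_j>p_j(\mathbf b)$, we have $x_j(\mathbf b')=1$ and $p_j(\mathbf b')=p_j(\mathbf b)$.
   Context: Setting (TFM). Each user $i$ has a true value $v_i\ge0$ and submits a single bid $b_i\ge0$; $\mathbf b=(b_1,\dots,b_m)$, $\mathbf b_{-i}$ the other bids. A TFM has an inclusion rule (run by the miner, choosing at most $B$ bids, $B$ finite or infinite) and confirmation, payment, miner-revenue rules (run by the blockchain on included bids); the mechanism treats users symmetrically. Composing the honest inclusion rule with the others gives deterministic $(\mathbf x,\mathbf p,\mu)$: $x_i(\mathbf b)\in\{0,1\}$ indicates confirmation, $p_i(\mathbf b)\le b_i$ the payment ($0$ if unconfirmed), $\mu(\mathbf b)$ the miner revenue (at most total payment). Strategic players (a user, the miner, or the miner with some users) may bid untruthfully after seeing all bids, inject fake bids (true value $0$), and (if the miner is involved) include any at most $B$ available bids. Weak ($1$-strict) utility: miner revenue (if the miner is in the player) plus $v-p$ for each confirmed transaction of the player (true value $v$, payment $p$), minus $(b-v)$ for each unconfirmed transaction of the player with bid $b>v$. Weak UIC: with an honest miner, each user's weak utility is maximized by truthful bidding without fake bids,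 whatever the other bids. $c$-weak-SCP: for every coalition of the miner with between $1$ and $c$ users, joint weak utility is maximized by truthful bidding and honest miner behavior, whatever the other bids. *)

(* Defs.v *)
From mathcomp Require Import all_boot all_order all_algebra.
From mathcomp Require Import reals.
Set Implicit Arguments. Unset Strict Implicit. Unset Printing Implicit Defensive.
Import Order.TTheory GRing.Theory Num.Theory.
Local Open Scope ring_scope.

(* Users are identified by their
   position in the bid vector.
   - cap  : block size B (None = infinite)
   - incl : honest inclusion rule, returns a bit mask over the bid vector
   - conf, pay, rev : confirmation / payment / miner-revenue rules, applied by
     the blockchain to the (ordered) list of included bids. *)
Record TFM (R : realType) := MkTFM {
  cap  : option nat;
  incl : seq R -> seq bool;
  conf : seq R -> seq bool;
  pay  : seq R -> seq R;
  rev  : seq R -> R }.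

Definition capOK (B : option nat) (k : nat) : bool :=
  if B is Some n then (k <= n)%N else true.

Definition nonneg_seq (R : realType) (s : seq R) : bool := all (fun v => 0 <= v) s.

(* Spread the per-included-bid results back to positions of the full vector;
   non-included positions get the default d. *)
Fixpoint spread (T : Type) (d : T) (m : seq bool) (s : seq T) : seq T :=
  match m with
  | [::] => [::]
  | true :: m' => head d s :: spread d m' (behead s)
  | false :: m' => d :: spread d m' s
  end.

Definition xo (R : realType) (M : TFM R) (c : seq R) (m : seq bool) : seq bool :=
  spread false m (conf M (mask m c)).
Definition po (R : realType) (M : TFM R) (c : seq R) (m : seq bool) : seq R :=
  spread 0 m (pay M (mask m c)).
Definition muo (R : realType) (M : TFM R) (c : seq R) (m : seq bool) : R :=
  rev M (mask m c).

Definition xh (R : realType) (M : TFM R) (b : seq R) : seq bool := xo M b (incl M b).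
Definition ph (R : realType) (M : TFM R) (b : seq R) : seq R := po M b (incl M b).
Definition muh (R : realType) (M : TFM R) (b : seq R) : R := muo M b (incl M b).

Definition wf_TFM (R : realType) (M : TFM R) : Prop :=
  (forall c : seq R, nonneg_seq c ->
     size (incl M c) = size c /\ capOK (cap M) (count id (incl M c)))
  /\ (forall blk : seq R, nonneg_seq blk -> capOK (cap M) (size blk) ->
       (forall k, (k < size blk)%N ->
          nth 0 (pay M blk) k <= nth 0 blk k /\
          (~~ nth false (conf M blk) k -> nth 0 (pay M blk) k = 0))
       /\ rev M blk <= \sum_(k < size blk) nth 0 (pay M blk) k).

(* Tagged bid vectors: each entry is (Some u, bid) for the transaction of the
   original user u, or (None, bid) for a fake bid (true value 0). *)
Definition honest_tags (R : realType) (b : seq R) : seq (option nat * R) :=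
  [seq (Some u, nth 0 b u) | u <- iota 0 (size b)].

(* t is a possible play when users in S are strategic (true bid vector b):
   real users keep their order, non-strategic users keep their bids,
   fake bids may be inserted anywhere, all bids are nonnegative. *)
Definition valid_dev (R : realType) (b : seq R) (S : seq nat)
    (t : seq (option nat * R)) : Prop :=
  pmap fst t = iota 0 (size b) /\
  all (fun e : option nat * R =>
         (0 <= e.2) &&
         (if e.1 is Some u then (u \in S) || (e.2 == nth 0 b u) else true)) t.

Definition owned (S : seq nat) (tag : option nat) : bool :=
  if tag is Some u then u \in S else true.

Definition tvalue (R : realType) (b : seq R) (tag : option nat) : R :=
  if tag is Some u then nth 0 b u else 0.

Definition contrib (R : realType) (x : bool) (p bid v : R) : R :=
  if x then v - p else if v < bid then v - bid else 0.

Definition util (R : realType) (M : TFM R) (miner : bool) (b : seq R)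
    (S : seq nat) (t : seq (option nat * R)) (m : seq bool) : R :=
  let c := map snd t in
  let tags := map fst t in
  (if miner then muo M c m else 0) +
  \sum_(k < size t)
     (if owned S (nth None tags k)
      then contrib (nth false (xo M c m) k) (nth 0 (po M c m) k) (nth 0 c k)
                   (tvalue b (nth None tags k))
      else 0).

Definition weakUIC (R : realType) (M : TFM R) : Prop :=
  forall b : seq R, nonneg_seq b -> forall i : nat, (i < size b)%N ->
  forall t, valid_dev b [:: i] t ->
    util M false b [:: i] t (incl M (map snd t))
    <= util M false b [:: i] (honest_tags b) (incl M b).

Definition weakSCP (R : realType) (M : TFM R) (c : nat) : Prop :=
  forall b : seq R, nonneg_seq b ->
  forall S : seq nat, uniq S -> (0 < size S <= c)%N ->
    all (fun u => (u < size b)%N) S ->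
  forall (t : seq (option nat * R)) (m : seq bool), valid_dev b S t ->
    size m = size t -> capOK (cap M) (count id m) ->
    util M true b S t m <= util M true b S (honest_tags b) (incl M b).

(* Main.v *)
Require Import Defs.
From mathcomp Require Import all_boot all_order all_algebra.
From mathcomp Require Import reals.
From mathcomp Require Import lra.
Import Order.TTheory GRing.Theory Num.Theory.
Local Open Scope ring_scope.

Section Aux.
Variable (R : realType) (M : TFM R).

Definition Ct (c v : seq R) (k : nat) : R :=
  contrib (nth false (xh M c) k) (nth 0 (ph M c) k) (nth 0 c k) (nth 0 v k).

Lemma honest_snd (c : seq R) : map snd (honest_tags c) = c.
Proof.
apply: (eq_trans _ (mkseq_nth 0 c)); rewrite /honest_tags /mkseq -map_comp.
by apply: eq_map.
Qed.

Lemma honest_fst (c : seq R) : map fst (honest_tags c) = map Some (iota 0 (size c)).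
Proof. by rewrite /honest_tags -map_comp. Qed.

Lemma honest_size (c : seq R) : size (honest_tags c) = size c.
Proof. by rewrite size_map size_iota. Qed.

Lemma honest_pmap (c : seq R) : pmap fst (honest_tags c) = iota 0 (size c).
Proof. by rewrite /honest_tags; elim: (iota 0 (size c)) => //= u s ->. Qed.

Lemma util_h miner (v : seq R) S (c : seq R) :
  util M miner v S (honest_tags c) (incl M c) =
  (if miner then muh M c else 0) +
  \sum_(k < size c) (if (k : nat) \in S then Ct c v k else 0).
Proof.
rewrite /util honest_snd honest_fst; congr (_ + _).
rewrite honest_size; apply: eq_bigr => k _.
rewrite (nth_map 0) ?size_iota // nth_iota //.
Qed.

Lemma sum1 n i (F : nat -> R) : (i < n)%N ->
  \sum_(k < n) (if (k : nat) \in [:: i] then F k else 0) = F i.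
Proof.
move=> Hi; rewrite (bigD1 (Ordinal Hi)) //= inE eqxx big1 ?addr0 // => k Hk.
rewrite inE; case: eqP => // e; move: Hk.
by rewrite (_ : k = Ordinal Hi) ?eqxx //; apply: val_inj.
Qed.

Lemma sum2 n i j (F : nat -> R) : i != j -> (i < n)%N -> (j < n)%N ->
  \sum_(k < n) (if (k : nat) \in [:: i; j] then F k else 0) = F i + F j.
Proof.
move=> Hij Hi Hj; rewrite -(@sum1 n i F Hi) -(@sum1 n j F Hj) -big_split.
apply: eq_bigr => k _; rewrite !inE.
have [->|ni] := eqVneq (k : nat) i; first by rewrite ?eqxx (negbTE Hij) /= addr0.
by rewrite /=; case: eqP => _ /=; rewrite ?add0r ?addr0.
Qed.

Lemma core (c c' : seq R) i :
  wf_TFM M -> weakUIC M -> weakSCP M 2 ->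
  nonneg_seq c -> nonneg_seq c' -> size c' = size c ->
  (forall k, k != i -> nth 0 c' k = nth 0 c k) -> (i < size c)%N ->
  nth false (xh M c) i -> nth false (xh M c') i ->
  [/\ nth 0 (ph M c) i <= nth 0 (ph M c') i,
      muh M c' - nth 0 (ph M c') i <= muh M c - nth 0 (ph M c) i &
      forall j, j != i -> (j < size c)%N ->
        muh M c' - nth 0 (ph M c') i + Ct c' c' j <=
        muh M c - nth 0 (ph M c) i + Ct c c j].
Proof.
move=> wf UIC SCP Hc Hc' Hs Hd Hi Hx Hx'.
have Hi' : (i < size c')%N by rewrite Hs.
have valid : forall S, i \in S -> valid_dev c S (honest_tags c').
  move=> S HS; split; first by rewrite honest_pmap Hs.
  apply/allP => e /mapP [u]; rewrite mem_iota add0n => /andP[_ Hu] -> /=.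
  apply/andP; split; first by move: Hc' => /(all_nthP 0); apply.
  have [->|ne] := eqVneq u i; first by rewrite HS.
  by rewrite Hd // eqxx orbT.
have [Hsz Hcap] := wf.1 c' Hc'.
have Hm : size (incl M c') = size (honest_tags c') by rewrite Hsz honest_size.
split.
- have := UIC c Hc i Hi (honest_tags c') (valid [:: i] (mem_head _ _)).
  rewrite honest_snd !util_h !sum1 // /Ct /contrib Hx Hx' !add0r; lra.
- have Ha1 : all (fun u => (u < size c)%N) [:: i] by rewrite /= Hi.
  have := SCP c Hc [:: i] isT isT Ha1 (honest_tags c') (incl M c')
    (valid [:: i] (mem_head _ _)) Hm Hcap.
  rewrite !util_h !sum1 // /Ct /contrib Hx Hx'; lra.
- move=> j Hji Hj.
  have Hj' : (j < size c')%N by rewrite Hs.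
  have Hu : uniq [:: i; j] by rewrite /= inE eq_sym (negbTE Hji).
  have Ha2 : all (fun u => (u < size c)%N) [:: i; j] by rewrite /= Hi Hj.
  have := SCP c Hc [:: i; j] Hu isT Ha2 (honest_tags c') (incl M c')
    (valid [:: i; j] (mem_head _ _)) Hm Hcap.
  rewrite eq_sym in Hji.
  rewrite !util_h (@sum2 _ i j (Ct c' c)) // (@sum2 _ i j (Ct c c)) //.
  have -> : Ct c' c j = Ct c' c' j by rewrite /Ct Hd // eq_sym.
  rewrite {1 3}/Ct /contrib Hx Hx'; lra.
Qed.

End Aux.

Theorem mainTheorem13 (R : realType) (M : TFM R) :
  wf_TFM M -> weakUIC M -> weakSCP M 2 ->
  forall (b : seq R) (i : nat) (bi' : R),
    nonneg_seq b -> (i < size b)%N -> 0 <= bi' ->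
    let b' := set_nth 0 b i bi' in
    nth false (xh M b) i -> nth false (xh M b') i ->
    muh M b = muh M b' /\
    (forall j : nat, (j < size b)%N ->
       nth false (xh M b) j -> nth 0 (ph M b) j < nth 0 b j ->
       nth false (xh M b') j /\ nth 0 (ph M b') j = nth 0 (ph M b) j).
Proof.
move=> wf UIC SCP b i bi' Hb Hi Hbi b' Hx Hx'.
have Hs : size b' = size b by rewrite size_set_nth; apply/maxn_idPr.
have Hd : forall k, k != i -> nth 0 b' k = nth 0 b k.
  by move=> k Hk; rewrite nth_set_nth /= (negbTE Hk).
have Hb' : nonneg_seq b'.
  apply/(all_nthP 0) => k Hk; rewrite nth_set_nth /=; case: eqP => // _.
  by move: Hb => /(all_nthP 0); apply; rewrite -Hs.
have [A1 B1 C1] := @core R M _ _ i wf UIC SCP Hb Hb' Hs Hd Hi Hx Hx'.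
have Hi' : (i < size b')%N by rewrite Hs.
have [A2 B2 C2] := @core R M _ _ i wf UIC SCP Hb' Hb (esym Hs)
  (fun k Hk => esym (Hd k Hk)) Hi' Hx' Hx.
have Hp : nth 0 (ph M b') i = nth 0 (ph M b) i by apply/eqP; rewrite eq_le A1 A2.
split; first lra.
move=> j Hj Hxj Hpj.
have [->|Hji] := eqVneq j i; first by split.
have Hj' : (j < size b')%N by rewrite Hs.
have := C1 j Hji Hj; have := C2 j Hji Hj'.
rewrite /Ct /contrib Hxj Hd //.
case: (nth false (xh M b') j) => H H0; first by split => //; lra.
by rewrite ltxx in H H0 *; lra.
Qed.
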